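(* Let $p\geq1$, $\mu>0$, and let $g:\mathbb{R}^n\to\mathbb{R}\cup\{+\infty\}$ be convex. Let $\lambda^{\ast}$ be the optimal solution of $$\min_{\lambda\in\mathbb{R}^n}\Big\{g(\lambda)+\frac{\mu}{1+\frac1p}\lVert\lambda\rVert^{1+\frac1p}\Big\},$$ and suppose $\lambda^{\ast}=0$. Let $\lambda^k\in\mathbb{R}^n$ with $\lVert\lambda^k\rVert>0$, set $t^k=\lVert\lambda^k\rVert^{\frac1p-1}$, and let $$\lambda^{k+1}=\arg\min_{\lambda\in\mathbb{R}^n}\Big\{g(\lambda)+\frac{\mu}{2}t^k\lVert\lambda\rVert^2\Big\}.$$ Then $\lambda^{k+1}=\lambda^{\ast}$ (i.e. $\lambda^{k+1}=0$).
   Context: $\lVert\cdot\rVert$ is the Euclidean norm. The minimizers above are assumed to exist. This is one step of the fixed point iteration: given $\lambda^k$, set $t^k=\lVert\lambda^k\rVert^{1/p-1}$ if $\lambda^k\neq0$ and $t^k=0$ otherwise, and $\lambda^{k+1}=\arg\min_\lambda\{g(\lambda)+\frac{\mu}{2}t^k\lVert\lambda\rVert^2\}$. *)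

(* Defs.v *)
From mathcomp Require Import all_boot all_order all_algebra.
From mathcomp Require Import all_classical all_reals all_analysis.
Set Implicit Arguments. Unset Strict Implicit. Unset Printing Implicit Defensive.
Import Order.TTheory GRing.Theory Num.Theory.
Local Open Scope ring_scope.

Definition enorm (R : realType) (n : nat) (x : 'rV[R]_n) : R :=
  Num.sqrt (\sum_(i < n) x ord0 i ^+ 2).

Definition convex_ext (R : realType) (n : nat) (g : 'rV[R]_n -> \bar R) : Prop :=
  (forall x, g x != -oo%E) /\
  forall (x y : 'rV[R]_n) (t : R), 0 <= t <= 1 ->
    (g ((t *: x + (1 - t) *: y)%R) <= t%:E * g x + (1 - t)%:E * g y)%E.

Definition is_argmin (R : realType) (n : nat) (F : 'rV[R]_n -> \bar R) (x : 'rV[R]_n) : Prop :=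
  forall y, (F x <= F y)%E.

(* Main.v *)
Require Import Defs.
From mathcomp Require Import all_boot all_order all_algebra.
From mathcomp Require Import all_classical all_reals all_analysis.
From mathcomp Require Import ring lra.
Import Order.TTheory GRing.Theory Num.Theory.
Local Open Scope ring_scope.

Lemma enorm_ge0 (R : realType) n (x : 'rV[R]_n) : 0 <= enorm x.
Proof. exact: sqrtr_ge0. Qed.

Lemma enormZ (R : realType) n (t : R) (x : 'rV[R]_n) : 0 <= t -> enorm (t *: x) = t * enorm x.
Proof.
move=> t0; rewrite /enorm.
under eq_bigr => i _ do rewrite mxE exprMn.
by rewrite -mulr_sumr sqrtrM ?sqrtr_sqr ?ger0_norm // sqr_ge0.
Qed.

Lemma enorm0 (R : realType) n : enorm (0 : 'rV[R]_n) = 0.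
Proof. by rewrite -(scale0r 0) enormZ // mul0r. Qed.

Lemma enorm_eq0 (R : realType) n (x : 'rV[R]_n) : enorm x = 0 -> x = 0.
Proof.
move=> /eqP; rewrite /enorm sqrtr_eq0 => H.
have H0 : \sum_(i < n) x ord0 i ^+ 2 = 0.
  by apply/eqP; rewrite eq_le H /= sumr_ge0 // => i _; rewrite sqr_ge0.
apply/rowP => i; rewrite mxE.
have := @psumr_eq0P _ _ predT (fun j => x ord0 j ^+ 2) (fun j _ => sqr_ge0 (x ord0 j)) H0 i isT.
by move/eqP; rewrite sqrf_eq0 => /eqP.
Qed.

Lemma key (R : realType) (a b c r : R) : 0 <= c -> 0 < r ->
  (forall t, 0 < t <= 1 -> a <= b + c * t `^ r) -> a <= b.
Proof.
move=> c0 r0 H; rewrite leNgt; apply/negP => ba.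
set e := (a - b) / (2 * (c + 1)).
have e0 : 0 < e by apply: divr_gt0; lra.
set t := Num.min 1 (e `^ (r^-1)).
have t0 : 0 < t by rewrite /t lt_min ltr01 powR_gt0.
have t1 : t <= 1 by rewrite /t ge_min lexx.
have := H t (andb_true_intro (conj t0 t1)).
have tr : t `^ r <= e.
  have -> : e = (e `^ (r^-1)) `^ r.
    by rewrite -powRrM mulVf ?gt_eqF // powRr1 // ltW.
  apply: ge0_ler_powR.
  - exact: ltW.
  - by rewrite nnegrE ltW.
  - by rewrite nnegrE powR_ge0.
  - by rewrite /t ge_min lexx orbT.
have : c * t `^ r <= c * e by rewrite ler_wpM2l.
have : c * e < a - b.
  rewrite /e mulrA ltr_pdivrMr; last lra.
  have : 0 < a - b by lra.
  nra.
lra.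
Qed.

Theorem theorem4p1 (R : realType) (n : nat) (p mu : R) (g : 'rV[R]_n -> \bar R)
  (lamk lamk1 : 'rV[R]_n) :
  1 <= p -> 0 < mu -> convex_ext g ->
  (g (0%R : 'rV[R]_n) < +oo)%E ->
  is_argmin (fun l => (g l + (mu / (1 + p^-1) * (enorm l `^ (1 + p^-1)))%:E)%E) (0%R : 'rV[R]_n) ->
  0 < enorm lamk ->
  is_argmin (fun l => (g l + (mu / 2 * (enorm lamk `^ (p^-1 - 1)) * enorm l ^+ 2)%:E)%E) lamk1 ->
  lamk1 = (0%R : 'rV[R]_n).
Proof.
move=> p1 mu0 [gN gC] g0 Hmin Nk Hk.
have p0 : 0 < p by apply: lt_le_trans p1; rewrite ltr01.
have r0 : 0 < p^-1 by rewrite invr_gt0.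
have q0 : 1 + p^-1 != 0 by rewrite gt_eqF // addr_gt0.
set C := mu / (1 + p^-1).
have C0 : 0 < C by rewrite /C divr_gt0 // addr_gt0.
have [a ga] : exists a, g 0 = a%:E.
  move: (gN 0) g0; case: (g 0) => [a _ _| //|//]; by exists a.
have step1 : forall y, a <= fine (g y) \/ g y = +oo%E.
  move=> y; case gy: (g y) => [b| |]; last by have := gN y; rewrite gy.
  - left => /=; apply: (@key R a b (C * enorm y `^ (1 + p^-1)) (p^-1)).
    + by rewrite mulr_ge0 ?powR_ge0 // ltW.
    + exact: r0.
    move=> t /andP [t0 t1].
    have := gC y 0 t; rewrite t1 ltW //= scaler0 addr0 gy ga => /(_ isT).
    have := Hmin (t *: y); rewrite /= ga enorm0 powR0 // mulr0.
    case: (g (t *: y)) => [z| |]; last 2 first.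
    - by move=> _; rewrite -!EFinM -!EFinD leye_eq.
    - by rewrite -EFinD /= leeNy_eq.
    rewrite -!EFinM -!EFinD !lee_fin enormZ; last exact: ltW.
    rewrite powRM; [|exact: ltW|exact: enorm_ge0].
    rewrite (@powRD _ t); last by rewrite (negbTE q0).
    rewrite powRr1; last exact: ltW.
    move=> h1 h2; rewrite -/C in h1.
    set X := C * enorm y `^ (1 + p^-1) * t `^ p^-1.
    have h : t * (a - b - X) <= 0.
      have -> : t * (a - b - X) = t * a - t * b - C * (t * t `^ p^-1 * enorm y `^ (1 + p^-1)).
        by rewrite /X; ring.
      lra.
    by move: h; rewrite pmulr_rle0 // => h; lra.
  - by right.
have := Hk 0; rewrite /= enorm0 expr0n /= mulr0 ga addr0.
have := step1 lamk1.
case glk: (g lamk1) => [w| |]; last 2 first.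
- by move=> _ /=; rewrite leye_eq.
- by have := gN lamk1; rewrite glk.
move=> [/= aw|//]; rewrite -EFinD lee_fin => h.
set c' := mu / 2 * enorm lamk `^ (p^-1 - 1).
have c'0 : 0 < c' by rewrite /c' mulr_gt0 ?powR_gt0 // divr_gt0.
have s2 : c' * enorm lamk1 ^+ 2 <= 0 by rewrite /c'; lra.
move: s2; rewrite pmulr_rle0 // => s2.
apply: enorm_eq0; apply/eqP; rewrite -sqrf_eq0 eq_le s2 sqr_ge0 //.
Qed.
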